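(* Let \[ A=\begin{pmatrix} a & \delta & \gamma \\ \bar\delta & b & \varepsilon \\ \bar\gamma & \bar\varepsilon & c\end{pmatrix} \] be a $3\times 3$ Hermitian matrix, where $a,b,c\in\mathbb{R}$ and $\gamma,\delta,\varepsilon\in\mathbb{C}$ are all non-zero. Then $A$ has an eigenvalue $\lambda$ of multiplicity at least $2$ if and only if \[ a-\frac{\bar\delta\gamma}{\varepsilon}=b-\frac{\delta\varepsilon}{\gamma}=c-\frac{\gamma\bar\varepsilon}{\delta}=\lambda\in\mathbb{R} \] (a system of three real equations). Moreover, when this holds, the remaining eigenvalue is $\lambda'=\operatorname{tr}(A)-2\lambda$, so the spectrum is $(\lambda,\lambda,\lambda')$, and $\lambda'>\lambda$ if and only if $\operatorname{Re}(\delta\varepsilon\bar\gamma)>0$.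
   Context: $\operatorname{tr}(A)$ denotes the trace of $A$, and a bar denotes complex conjugation. *)

(* Defs.v *)
From HB Require Import structures.
From mathcomp Require Import all_boot all_order all_algebra.
From mathcomp Require Import complex reals.
Set Implicit Arguments. Unset Strict Implicit. Unset Printing Implicit Defensive.
Import Order.TTheory GRing.Theory Num.Theory.
Local Open Scope ring_scope.

Definition herm3 (R : rcfType) (a b c : R) (gamma delta eps : R[i]) : 'M[R[i]]_3 :=
  \matrix_(i < 3, j < 3)
    nth 0 (nth [::] [:: [:: (a%:C)%C ; delta ; gamma ];
                        [:: delta^* ; (b%:C)%C ; eps ];
                        [:: gamma^* ; eps^* ; (c%:C)%C ] ] i) j.

Definition eig_mult (C : fieldType) (n : nat) (A : 'M[C]_n) (lambda : C) : nat :=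
  mup lambda (char_poly A).

(* Main.v *)
Require Import Defs.
From HB Require Import structures.
From mathcomp Require Import all_boot all_order all_algebra.
From mathcomp Require Import complex reals.
From mathcomp Require Import ring.
Import Order.TTheory GRing.Theory Num.Theory.
Local Open Scope ring_scope.

Lemma det3 (R : comNzRingType) (M : 'M[R]_3) :
  \det M = M 0 0 * (M 1 1 * M 2 2 - M 1 2 * M 2 1)
         - M 0 1 * (M 1 0 * M 2 2 - M 1 2 * M 2 0)
         + M 0 2 * (M 1 0 * M 2 1 - M 1 1 * M 2 0).
Proof.
rewrite (expand_det_row _ 0) !big_ord_recl big_ord0 /cofactor.
rewrite !(expand_det_row _ 0) !big_ord_recl !big_ord0 /cofactor !det_mx11 !mxE /=.
have [Mn HM] : exists Mn : nat -> nat -> R, forall i j, M i j = Mn i j.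
  by exists (fun i j => M (inord i) (inord j)) => i j; rewrite !inord_val.
rewrite !HM /=.
ring.
Qed.

Lemma cubic_double (F : fieldType) (t s d l : F) :
  (2 <= mup l ('X^3 - t%:P * 'X^2 + s%:P * 'X - d%:P))%N <-> (s = 2%:R * t * l - 3%:R * l^+2 /\ d = t * l^+2 - 2%:R * l^+3).
Proof.
set p := 'X^3 - t%:P * 'X^2 + s%:P * 'X - d%:P.
have pf : forall s' d', s' = 2%:R * t * l - 3%:R * l^+2 -> d' = t * l^+2 - 2%:R * l^+3 ->
  'X^3 - t%:P * 'X^2 + s'%:P * 'X - d'%:P = ('X - l%:P)^+2  *  ('X - (t - 2%:R * l)%:P).
  move=> s' d' -> ->; rewrite !rmorphB !rmorphM ?rmorphXn /= ?polyCn; ring.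
have pn0 : p != 0.
  apply/negP => /eqP/(congr1 (fun q : {poly F} => q`_3)).
  rewrite /p !coefE /=. 
  by rewrite !mulr0 !subr0 addr0 => /eqP; rewrite oner_eq0.
split.
  rewrite mup_geq // => /dvdpP [q Hq].
  have H0 : p.[l] = 0 by rewrite Hq hornerM horner_exp hornerXsubC subrr expr0n /= mulr0.
  have H1 : (p^`()).[l] = 0.
    by rewrite Hq derivM deriv_exp derivXsubC hornerD !hornerM /= mul1r expr1 hornerMn hornerXsubC subrr !mul0r mulr0 mul0rn ?addr0 ?mulr0 ?add0r.
  have H0' : l^+3 - t * l^+2 + s * l - d = 0.
    by rewrite -H0 /p !(hornerD, hornerN, hornerM, hornerC, hornerXn, hornerX).
  have H1' : 3%:R * l^+2 - 2%:R * t * l + s = 0.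
    rewrite -H1 /p !(derivD, derivN, deriv_mulC, derivC, derivXn, derivX) /=.
    rewrite !(hornerD, hornerN, hornerM, hornerC, hornerXn, hornerX, hornerMn).
    ring.

  have Hs : s = 2%:R * t * l - 3%:R * l^+2.
    apply/eqP; rewrite -subr_eq0; apply/eqP; rewrite -H1'; ring.
  split => //.
  apply/eqP; rewrite -subr_eq0 -oppr_eq0; apply/eqP; rewrite -H0' Hs; ring.
case=> Hs Hd; rewrite mup_geq // /p (pf s d Hs Hd).
by apply: dvdp_mulr; exact: dvdpp.
Qed.

Section Core.
Variable C : numClosedFieldType.
Variables (al bl cl g d e : C).
Hypotheses (ra : al \is Num.real) (rb : bl \is Num.real) (rc : cl \is Num.real).
Hypotheses (hg : g != 0) (hd : d != 0) (he : e != 0).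
Definition tt := al + bl + cl.
Definition ss := al * bl + bl * cl + al * cl - d * d^* - g * g^* - e * e^*.
Definition dd := al * bl * cl + d * e * g^* + g * d^* * e^* - al * e * e^* - bl * g * g^* - cl * d * d^*.

Lemma conj_real {x : C} : x \is Num.real -> x^* = x.
Proof. by move/CrealP. Qed.

Lemma cancel_nz (y x : C) : x != 0 -> y * x = 0 -> y = 0.
Proof. by move=> hx /eqP; rewrite mulf_eq0 (negPf hx) orbF => /eqP. Qed.

Lemma easy (l : C) : l \is Num.real ->
  (al - l) * e = d^* * g -> (bl - l) * g = d * e -> (cl - l) * d = g * e^* ->
  ss = 2%:R * tt * l - 3%:R * l^+2 /\ dd = tt * l^+2 - 2%:R * l^+3.
Proof.
move=> rl H1 H2 H3.
set x := al - l; set y := bl - l; set z := cl - l.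
have rx : x^* = x by apply: conj_real; rewrite rpredB.
have ry : y^* = y by apply: conj_real; rewrite rpredB.
have rz : z^* = z by apply: conj_real; rewrite rpredB.
have H1c : x * e^* = d * g^*.
  by have := congr1 Num.conj H1; rewrite !rmorphM /= rx conjCK.
have H2c : y * g^* = d^* * e^*.
  by have := congr1 Num.conj H2; rewrite !rmorphM /= ry.
have H3c : z * d^* = g^* * e.
  by have := congr1 Num.conj H3; rewrite !rmorphM /= rz conjCK.
have m3 : x * y - d * d^* = 0.
  apply: (@cancel_nz _ g hg).
  have -> : (x * y - d * d^*) * g = x * (y * g - d * e) + d * (x * e - d^* * g) by ring.
  by rewrite H1 H2 !subrr !mulr0 addr0.
have m1 : y * z - e * e^* = 0.
  apply: (@cancel_nz _ d hd).
  have -> : (y * z - e * e^*) * d = y * (z * d - g * e^*) + e^* * (y * g - d * e) by ring.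
  by rewrite H3 H2 !subrr !mulr0 addr0.
have m2 : x * z - g * g^* = 0.
  apply: (@cancel_nz _ d hd).
  have -> : (x * z - g * g^*) * d = x * (z * d - g * e^*) + g * (x * e^* - d * g^*) by ring.
  by rewrite H3 H1c !subrr !mulr0 addr0.
have dB : x * y * z + d * e * g^* + g * d^* * e^* - x * e * e^* - y * g * g^* - z * d * d^* = 0.
  have -> : x * y * z + d * e * g^* + g * d^* * e^* - x * e * e^* - y * g * g^* - z * d * d^*
     = x * (y * z - e * e^*) - d * (z * d^* - g^* * e) + g * (d^* * e^* - y * g^*) by ring.
  by rewrite m1 H3c H2c !subrr !mulr0 subr0 addr0.
split.
  apply/eqP; rewrite -subr_eq0; apply/eqP.
  rewrite -[RHS](_ : (y * z - e * e^*) + (x * z - g * g^*) + (x * y - d * d^*) = 0); last first.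
    by rewrite m1 m2 m3 !addr0.
  rewrite /ss /tt /x /y /z; ring.
apply/eqP; rewrite -subr_eq0; apply/eqP.
rewrite -[RHS](_ : (x * y * z + d * e * g^* + g * d^* * e^* - x * e * e^* - y * g * g^* - z * d * d^*)
   + l * ((y * z - e * e^*) + (x * z - g * g^*) + (x * y - d * d^*)) = 0); last first.
  by rewrite dB m1 m2 m3 !addr0 mulr0 addr0.
rewrite /dd /tt /x /y /z; ring.
Qed.

Lemma zero_of3 (m1 m2 m3 : C) : m1 \is Num.real -> m2 \is Num.real -> m3 \is Num.real ->
  m1 + m2 + m3 = 0 -> 0 <= m1 * m2 -> 0 <= m1 * m3 -> 0 <= m2 * m3 ->
  [/\ m1 = 0, m2 = 0 & m3 = 0].
Proof.
move=> r1 r2 r3 S p12 p13 p23.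
have sq0 : forall m : C, m \is Num.real -> m ^+ 2 <= 0 -> m = 0.
  move=> m rm le0; apply/eqP; rewrite -sqrf_eq0; apply/eqP/le_anti.
  by rewrite le0 real_exprn_even_ge0.
have e1 : m1 = - m2 - m3 by apply/eqP; rewrite -subr_eq0 -S; apply/eqP; ring.
have e2 : m2 = - m1 - m3 by apply/eqP; rewrite -subr_eq0 -S; apply/eqP; ring.
have e3 : m3 = - m1 - m2 by apply/eqP; rewrite -subr_eq0 -S; apply/eqP; ring.
split.
- apply: sq0 => //; rewrite (_ : m1 ^+ 2 = - (m1 * m2 + m1 * m3)); last first.
    by rewrite expr2 {1}e1; ring.
  by rewrite oppr_le0 addr_ge0.
- apply: sq0 => //; rewrite (_ : m2 ^+ 2 = - (m1 * m2 + m2 * m3)); last first.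
    by rewrite expr2 {1}e2; ring.
  by rewrite oppr_le0 addr_ge0.
- apply: sq0 => //; rewrite (_ : m3 ^+ 2 = - (m1 * m3 + m2 * m3)); last first.
    by rewrite expr2 {1}e3; ring.
  by rewrite oppr_le0 addr_ge0.
Qed.

Lemma real_nn (x : C) : x * x^* \is Num.real.
Proof. exact/ger0_real/mul_conjC_ge0. Qed.

Lemma hard (l : C) :
  ss = 2%:R * tt * l - 3%:R * l^+2 -> dd = tt * l^+2 - 2%:R * l^+3 ->
  [/\ l \is Num.real, (al - l) * e = d^* * g, (bl - l) * g = d * e & (cl - l) * d = g * e^*].
Proof.
move=> E1 E2.
have ca := conj_real ra; have cb := conj_real rb; have cc := conj_real rc.
have ttc : tt^* = tt by rewrite /tt !rmorphD /= ca cb cc.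
have ssc : ss^* = ss.
  by rewrite /ss !rmorphB !rmorphD !rmorphM /= !conjCK ca cb cc; ring.
have ddc : dd^* = dd.
  by rewrite /dd !rmorphB !rmorphD !rmorphM /= !conjCK ca cb cc; ring.
have E1c : ss = 2%:R * tt * l^* - 3%:R * l^*^+2.
  by have := congr1 Num.conj E1; rewrite ssc !rmorphB !rmorphM /= !rmorph_nat ttc => ->; ring.
have E2c : dd = tt * l^*^+2 - 2%:R * l^*^+3.
  by have := congr1 Num.conj E2; rewrite ddc !rmorphB !rmorphM /= ?rmorphXn /= !rmorph_nat ttc => ->; ring.
have rl : l \is Num.real.
  have h3 : (l - l^*) ^+ 3 = 0.
    rewrite (_ : (l - l^*) ^+ 3 = (l + l^*) * ((2%:R * tt * l - 3%:R * l^+2) - (2%:R * tt * l^* - 3%:R * l^*^+2))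
       - 2%:R * ((tt * l^+2 - 2%:R * l^+3) - (tt * l^*^+2 - 2%:R * l^*^+3))); last by ring.
    by rewrite -E1 -E1c -E2 -E2c !subrr !mulr0 subr0.
  move/eqP: h3; rewrite expf_eq0 /= subr_eq0 => /eqP h.
  by apply/CrealP; rewrite -h.
set x := al - l; set y := bl - l; set z := cl - l.
have rx : x \is Num.real by rewrite rpredB.
have ry : y \is Num.real by rewrite rpredB.
have rz : z \is Num.real by rewrite rpredB.
have cx := conj_real rx; have cy := conj_real ry; have cz := conj_real rz.
have S : (y * z - e * e^*) + (x * z - g * g^*) + (x * y - d * d^*) = 0.
  rewrite (_ : _ + _ = ss - (2%:R * tt * l - 3%:R * l^+2)); first by rewrite -E1 subrr.
  by rewrite /ss /tt /x /y /z; ring.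
pose D := x * y * z + d * e * g^* + g * d^* * e^* - x * e * e^* - y * g * g^* - z * d * d^*.
have dB : D = 0.
  rewrite (_ : D = (dd - (tt * l^+2 - 2%:R * l^+3)) - l * ((y * z - e * e^*) + (x * z - g * g^*) + (x * y - d * d^*))).
    by rewrite S -E2 subrr mulr0 subr0.
  by rewrite /D /dd /tt /x /y /z; ring.
have I23 : (x * z - g * g^*) * (x * y - d * d^*) = (x * e - d^* * g) * (x * e - d^* * g)^* + x * D.
  rewrite !rmorphB !rmorphM /= cx conjCK /D; ring.
have I13 : (y * z - e * e^*) * (x * y - d * d^*) = (y * g - d * e) * (y * g - d * e)^* + y * D.
  rewrite !rmorphB !rmorphM /= cy /D; ring.
have I12 : (y * z - e * e^*) * (x * z - g * g^*) = (z * d - g * e^*) * (z * d - g * e^*)^* + z * D.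
  rewrite !rmorphB !rmorphM /= cz conjCK /D; ring.
rewrite dB !mulr0 !addr0 in I23 I13 I12.
have p12 : 0 <= (y * z - e * e^*) * (x * z - g * g^*) by rewrite I12 mul_conjC_ge0.
have p13 : 0 <= (y * z - e * e^*) * (x * y - d * d^*) by rewrite I13 mul_conjC_ge0.
have p23 : 0 <= (x * z - g * g^*) * (x * y - d * d^*) by rewrite I23 mul_conjC_ge0.
have [z1 z2 z3] := zero_of3 _ _ _ (rpredB (rpredM ry rz) (real_nn e))
  (rpredB (rpredM rx rz) (real_nn g)) (rpredB (rpredM rx ry) (real_nn d)) S p12 p13 p23.
move: I23 I13 I12; rewrite z1 z2 z3 !mul0r.
move=> /esym/eqP; rewrite mul_conjC_eq0 subr_eq0 => /eqP X1.
move=> /esym/eqP; rewrite mul_conjC_eq0 subr_eq0 => /eqP X2.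
move=> /esym/eqP; rewrite mul_conjC_eq0 subr_eq0 => /eqP X3.
by split.
Qed.

Lemma order (l : C) : l \is Num.real ->
  (al - l) * e = d^* * g -> (bl - l) * g = d * e -> (cl - l) * d = g * e^* ->
  (l < tt - 2%:R * l <-> 0 < 'Re (d * e * g^*)).
Proof.
move=> rl H1 H2 H3.
set x := al - l in H1 *; set y := bl - l in H2 *; set z := cl - l in H3 *.
have rx : x \is Num.real by rewrite rpredB.
have cx : x^* = x by apply: conj_real.
have H1c : x * e^* = d * g^*.
  by have := congr1 Num.conj H1; rewrite !rmorphM /= cx conjCK.
have Px : x * (e * e^*) = d * e * g^*.
  by rewrite mulrA mulrAC H1c; ring.
have Py : y * (g * g^*) = d * e * g^* by rewrite mulrA H2.
have Pz : z * (d * d^*) = d * e * g^*.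
  have rz : z \is Num.real by rewrite rpredB.
  have H3c : z * d^* = g^* * e.
    by have := congr1 Num.conj H3; rewrite !rmorphM /= (conj_real rz) conjCK.
  by rewrite mulrCA H3c; ring.
have rP : d * e * g^* \is Num.real by rewrite -Px rpredM // real_nn.
rewrite (Creal_ReP _ rP).
have ne : e * e^* != 0 by rewrite mulf_neq0 // conjC_eq0.
have ng : g * g^* != 0 by rewrite mulf_neq0 // conjC_eq0.
have nd : d * d^* != 0 by rewrite mulf_neq0 // conjC_eq0.
have -> : tt - 2%:R * l = l + (d * e * g^*) * ((e * e^*)^-1 + (g * g^*)^-1 + (d * d^*)^-1).
  rewrite !mulrDr -{1}Px -{1}Py -{1}Pz !mulfK //.
  rewrite /tt /x /y /z; ring.
have kp : 0 < (e * e^*)^-1 + (g * g^*)^-1 + (d * d^*)^-1.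
  by rewrite !addr_gt0 // invr_gt0 mul_conjC_gt0.
by rewrite ltrDl pmulr_lgt0.
Qed.

End Core.
Arguments tt {C}. Arguments ss {C}. Arguments dd {C}.


Lemma cp (R : realType) (a b c : R) (g d e : R[i]) :
  char_poly (herm3 a b c g d e) =
  'X^3 - (tt (a%:C)%C (b%:C)%C (c%:C)%C)%:P * 'X^2
  + (ss (a%:C)%C (b%:C)%C (c%:C)%C g d e)%:P * 'X
  - (dd (a%:C)%C (b%:C)%C (c%:C)%C g d e)%:P.
Proof.
rewrite /char_poly /char_poly_mx det3 !mxE /= /tt /ss /dd ?mulr1n ?mulr0n.
ring.
Qed.

Lemma trA (R : realType) (a b c : R) (g d e : R[i]) :
  \tr (herm3 a b c g d e) = tt (a%:C)%C (b%:C)%C (c%:C)%C.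
Proof. by rewrite /mxtrace !big_ord_recl big_ord0 !mxE /= addr0 addrA. Qed.

Lemma cubic_fact (F : fieldType) (t s d l : F) :
  s = 2%:R * t * l - 3%:R * l^+2 -> d = t * l^+2 - 2%:R * l^+3 ->
  'X^3 - t%:P * 'X^2 + s%:P * 'X - d%:P = ('X - l%:P)^+2 * ('X - (t - 2%:R * l)%:P).
Proof. move=> -> ->; rewrite !rmorphB !rmorphM ?rmorphXn /= ?polyCn; ring. Qed.

Lemma divE (F : fieldType) (A B e l : F) : e != 0 ->
  (A - B / e = l) <-> ((A - l) * e = B).
Proof.
move=> he; split.
  move=> <-; rewrite (_ : A - (A - B / e) = B / e); first exact: mulfVK.
  ring.
move=> H; rewrite -H mulfK //; ring.
Qed.

Lemma realC (R : realType) (a : R) : (a%:C)%C \is Num.real.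
Proof. by apply/complex_realP; exists a. Qed.

Theorem mainTheorem1 (R : realType) (a b c : R) (gamma delta eps : R[i])
  (hg : gamma != 0) (hd : delta != 0) (he : eps != 0) :
  let A := herm3 a b c gamma delta eps in
  (forall lambda : R[i],
      (2 <= eig_mult A lambda)%N <->
      [/\ (a%:C)%C - delta^* * gamma / eps = lambda,
          (b%:C)%C - delta * eps / gamma = lambda,
          (c%:C)%C - gamma * eps^* / delta = lambda &
          lambda \is Num.real]) /\
  (forall lambda : R[i],
      (a%:C)%C - delta^* * gamma / eps = lambda ->
      (b%:C)%C - delta * eps / gamma = lambda ->
      (c%:C)%C - gamma * eps^* / delta = lambda ->
      lambda \is Num.real ->
      let lambda' := \tr A - 2%:R * lambda in
      char_poly A = ('X - lambda%:P) ^+ 2 * ('X - lambda'%:P) /\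
      (lambda < lambda' <-> 0 < 'Re (delta * eps * gamma^*))).
Proof.
move=> A.
have ra := @realC _ a; have rb := @realC _ b; have rc := @realC _ c.
split.
  move=> l; rewrite /eig_mult /A cp.
  eapply iff_trans; first exact: cubic_double.
  split.
    case=> E1 E2.
    have [rl X1 X2 X3] := @hard _ _ _ _ _ _ _ ra rb rc _ E1 E2.
    by split => //; apply/divE.
  case=> /divE - /(_ he) H1 /divE - /(_ hg) H2 /divE - /(_ hd) H3 rl.
  exact: (@easy _ _ _ _ _ _ _ ra rb rc hg hd _ rl H1 H2 H3).
move=> l /divE - /(_ he) H1 /divE - /(_ hg) H2 /divE - /(_ hd) H3 rl lam'.
rewrite /lam' /A trA; split.
  have [E1 E2] := @easy _ _ _ _ _ _ _ ra rb rc hg hd _ rl H1 H2 H3.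
  by rewrite cp; apply: cubic_fact.
exact: (@order _ _ _ _ _ _ _ ra rc hg hd he _ rl H1 H2 H3).
Qed.
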